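(* Let $\mathcal G\le\mathcal T$ and $\mathcal I$ be as in the context, with $\mathcal G$ acting on $\mathcal I$ by $(a_{ij})\cdot C_A=C_{(a_{ij})\cdot A}$. Form the semidirect products $U(M(\rho,k))\rtimes\mathcal T$ with multiplication $(A,a)(B,b)=(A\,(a\cdot B),ab)$ and $\mathcal I\rtimes\mathcal G$ with multiplication $(C_A,a)(C_B,b)=(C_AC_{a\cdot B},ab)$, and let $D_0=\{({\rm diag}(d_1,\dots,d_n),(d_i^{-1}d_j)_{i\rho j}) : d_i\in k^*\}$, a normal subgroup of $U(M(\rho,k))\rtimes\mathcal T$. Then the map $\Psi:\mathcal I\rtimes\mathcal G\to (U(M(\rho,k))\rtimes\mathcal T)/D_0$, $\Psi(C_A,(a_{ij}))=\overline{(A,(a_{ij}))}$, is well defined and is a group isomorphism.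
   Context: Let $k$ be a field, $n\ge1$, $\rho$ a preorder on $\{1,\dots,n\}$, $M(\rho,k)$ the subalgebra of $M_n(k)$ of matrices with $(i,j)$-entry $0$ whenever $(i,j)\notin\rho$, $U(M(\rho,k))$ its unit group. $i\sim j$ iff $i\rho j$ and $j\rho i$; $\mathcal C$ is the set of classes, $\hat i$ the class of $i$, ordered by $\hat i\le\hat j$ iff $i\rho j$. $\mathcal T$ is the group (entrywise product) of families $(a_{ij})_{i\rho j}$ in $k^*$ with $a_{ij}a_{jr}=a_{ir}$ whenever $i\rho j$, $j\rho r$; for $(a_{ij})\in\mathcal T$ and $A=(\alpha_{ij})\in M(\rho,k)$, $(a_{ij})\cdot A$ has $(i,j)$-entry $a_{ij}\alpha_{ij}$ if $i\rho j$ and $0$ otherwise. A class $\alpha\in\mathcal C$ is isolated if $\alpha\le\beta$ or $\beta\le\alpha$ implies $\beta=\alpha$. $\Delta$ is the undirected graph whose vertices are the $i\in\{1,\dots,n\}$ with $\hat i$ not isolated, with an edge between $i,j$ iff $\hat i\neq\hat j$ and $\hat i,\hat j$ are comparable. Let $\Delta_1,\dots,\Delta_z$ be its connected components and choose a spanning tree $T_\ell$ of each $\Delta_\ell$. $\mathcal G$ is the subgroup of $\mathcal T$ of those $(a_{ij})_{i\rho j}$ with $a_{ij}=1$ whenever $i\rho j$ and either $i,j$ are joined by an edge of some $T_\ell$, or $i,j$ both lie in the same isolated class. $\mathcal I=\{C_A : A\in U(M(\rho,k))\}$ with $C_A(X)=AXA^{-1}$ is the group of inner automorphisms of $M(\rho,k)$.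 $\overline{y}$ denotes the class modulo $D_0$. *)

(* Defs.v *)
From HB Require Import structures.
From mathcomp Require Import all_boot all_order all_algebra.
Set Implicit Arguments. Unset Strict Implicit. Unset Printing Implicit Defensive.
Import GRing.Theory.
Local Open Scope ring_scope.

Section Defs.
Variables (k : fieldType) (n : nat) (rho : rel 'I_n).

Definition inM (X : 'M[k]_n) : bool :=
  [forall i, forall j, ~~ rho i j ==> (X i j == 0)].

Definition inU (A : 'M[k]_n) : bool :=
  [&& inM A, A \in unitmx & inM (invmx A)].

(* Families (a_ij)_{i rho j} encoded as n x n matrices whose entries off rho are 1. *)
Definition inT (a : 'M[k]_n) : bool :=
  [forall i, forall j, if rho i j then a i j != 0 else a i j == 1] &&
  [forall i, forall j, forall r, rho i j && rho j r ==> (a i j * a j r == a i r)].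

Definition famM (a b : 'M[k]_n) : 'M[k]_n := \matrix_(i, j) (a i j * b i j).
Definition famV (a : 'M[k]_n) : 'M[k]_n := \matrix_(i, j) (a i j)^-1.
Definition fam1 : 'M[k]_n := const_mx 1.

Definition actM (a A : 'M[k]_n) : 'M[k]_n :=
  \matrix_(i, j) (if rho i j then a i j * A i j else 0).

Definition inUT (x : 'M[k]_n * 'M[k]_n) : bool := inU x.1 && inT x.2.
Definition sdmul (x y : 'M[k]_n * 'M[k]_n) : 'M[k]_n * 'M[k]_n :=
  (x.1 *m actM x.2 y.1, famM x.2 y.2).
Definition sdone : 'M[k]_n * 'M[k]_n := (1%:M, fam1).
Definition sdinv (x : 'M[k]_n * 'M[k]_n) : 'M[k]_n * 'M[k]_n :=
  (actM (famV x.2) (invmx x.1), famV x.2).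

Definition D0elt (d : 'I_n -> k) : 'M[k]_n * 'M[k]_n :=
  (diag_mx (\row_i d i),
   \matrix_(i, j) (if rho i j then (d i)^-1 * d j else 1)).
Definition inD0 (x : 'M[k]_n * 'M[k]_n) : Prop :=
  exists d : 'I_n -> k, (forall i, d i != 0) /\ x = D0elt d.

Definition modD0 (x y : 'M[k]_n * 'M[k]_n) : Prop :=
  exists2 d, inD0 d & y = sdmul x d.

Definition Cmap (A : 'M[k]_n) (X : 'M[k]_n) : 'M[k]_n := A *m X *m invmx A.
Definition autEq (f g : 'M[k]_n -> 'M[k]_n) : Prop :=
  forall X, inM X -> f X = g X.

Definition equivP (i j : 'I_n) : bool := rho i j && rho j i.
Definition compar (i j : 'I_n) : bool := rho i j || rho j i.
Definition isolated (i : 'I_n) : bool :=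
  [forall j, compar i j ==> equivP i j].
Definition DeltaE : rel 'I_n := fun i j => ~~ equivP i j && compar i j.

(* F is the union of spanning trees T_l of the connected components of Delta:
   a symmetric set of Delta-edges with the same connectivity as Delta, minimal
   for this property (every edge of F is a bridge of F). *)
Definition removeE (F : rel 'I_n) (u v : 'I_n) : rel 'I_n :=
  fun x y => F x y && ~~ ((x == u) && (y == v)) && ~~ ((x == v) && (y == u)).
Definition spanning_forest (F : rel 'I_n) : Prop :=
  [/\ symmetric F,
      (forall i j, F i j -> DeltaE i j),
      (forall i j, connect F i j = connect DeltaE i j) &
      (forall u v, F u v -> ~~ connect (removeE F u v) u v)].

Definition inG (F : rel 'I_n) (a : 'M[k]_n) : bool :=
  inT a &&
  [forall i, forall j,
     rho i j && (F i j || (isolated i && equivP i j)) ==> (a i j == 1)].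

End Defs.

(* Main.v *)
Require Import Defs.
From HB Require Import structures.
From mathcomp Require Import all_boot all_order all_algebra ring.
Import GRing.Theory.
Local Open Scope ring_scope.
Set Implicit Arguments. Unset Strict Implicit.

Local Notation dg d := (diag_mx (\row_i d i)).

Lemma dgE (k : fieldType) (n : nat) (d : 'I_n -> k) i j :
  (dg d) i j = if i == j then d i else 0.
Proof. by rewrite !mxE; case: (i == j); rewrite ?mulr1n ?mulr0n. Qed.

Lemma dgM (k : fieldType) (n : nat) (d e : 'I_n -> k) :
  dg d *m dg e = dg (fun i => d i * e i).
Proof. by apply/matrixP=> i j; rewrite mulmx_diag !dgE !mxE. Qed.

Lemma dg1 (k : fieldType) (n : nat) : dg (fun _ : 'I_n => (1 : k)) = 1%:M.
Proof. by apply/matrixP=> i j; rewrite dgE !mxE; case: (i == j). Qed.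

Lemma dgV (k : fieldType) (n : nat) (d : 'I_n -> k) :
  (forall i, d i != 0) -> dg d *m dg (fun i => (d i)^-1) = 1%:M.
Proof.
move=> H; rewrite dgM -dg1; congr diag_mx; apply/rowP=> i; rewrite !mxE.
by rewrite mulfV.
Qed.

Lemma inv_eq (k : fieldType) (n : nat) (Q Qi : 'M[k]_n) :
  Q *m Qi = 1%:M -> invmx Q = Qi.
Proof.
move=> H; have [uQ _] := mulmx1_unit H.
by rewrite -[invmx Q]mulmx1 -H mulmxA mulVmx // mul1mx.
Qed.

Lemma inv_eqV (k : fieldType) (n : nat) (Q Qi : 'M[k]_n) :
  Q *m Qi = 1%:M -> Qi *m Q = 1%:M.
Proof.
move=> H; have [uQ _] := mulmx1_unit H.
by rewrite -(inv_eq H) mulVmx.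
Qed.

Lemma dg_unit (k : fieldType) (n : nat) (d : 'I_n -> k) :
  (forall i, d i != 0) -> invmx (dg d) = dg (fun i => (d i)^-1).
Proof. by move=> H; apply: inv_eq; apply: dgV. Qed.

Lemma inMP (k : fieldType) (n : nat) (rho : rel 'I_n) (X : 'M[k]_n) :
  reflect (forall i j, ~~ rho i j -> X i j = 0) (inM rho X).
Proof.
apply: (iffP forallP) => [H i j nr|H i]; last first.
  by apply/forallP=> j; apply/implyP=> nr; rewrite H.
by have /forallP/(_ j)/implyP/(_ nr)/eqP := H i.
Qed.

Lemma inT_nz (k : fieldType) (n : nat) (rho : rel 'I_n) (a : 'M[k]_n) i j :
  inT rho a -> rho i j -> a i j != 0.
Proof.
by case/andP=> /forallP/(_ i)/forallP/(_ j) + _ r; rewrite r.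
Qed.

Lemma inT_off (k : fieldType) (n : nat) (rho : rel 'I_n) (a : 'M[k]_n) i j :
  inT rho a -> ~~ rho i j -> a i j = 1.
Proof.
by case/andP=> /forallP/(_ i)/forallP/(_ j) + _ /negbTE r; rewrite r => /eqP.
Qed.

Lemma inT_coc (k : fieldType) (n : nat) (rho : rel 'I_n) (a : 'M[k]_n) i j r :
  inT rho a -> rho i j -> rho j r -> a i j * a j r = a i r.
Proof.
case/andP=> _ /forallP/(_ i)/forallP/(_ j)/forallP/(_ r)/implyP H h1 h2.
by apply/eqP/H; rewrite h1 h2.
Qed.

Lemma inT_diag (k : fieldType) (n : nat) (rho : rel 'I_n) (a : 'M[k]_n) i :
  reflexive rho -> inT rho a -> a i i = 1.
Proof.
move=> Hr Ha; have := inT_coc Ha (Hr i) (Hr i).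
have nz := inT_nz Ha (Hr i).
by move=> /(congr1 (fun x => x / a i i)); rewrite mulfK // divff.
Qed.

Lemma inTP (k : fieldType) (n : nat) (rho : rel 'I_n) (a : 'M[k]_n) :
  (forall i j, rho i j -> a i j != 0) ->
  (forall i j, ~~ rho i j -> a i j = 1) ->
  (forall i j r, rho i j -> rho j r -> a i j * a j r = a i r) -> inT rho a.
Proof.
move=> H1 H2 H3; apply/andP; split.
  apply/forallP=> i; apply/forallP=> j; case: ifP => r; first by apply: H1.
  by rewrite H2 ?r.
apply/forallP=> i; apply/forallP=> j; apply/forallP=> r; apply/implyP.
by case/andP=> h1 h2; rewrite H3.
Qed.

Lemma actM_dg (k : fieldType) (n : nat) (rho : rel 'I_n) (a : 'M[k]_n) d :
  reflexive rho -> (forall i, a i i = 1) -> actM rho a (dg d) = dg d.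
Proof.
move=> Hr Ha; apply/matrixP=> i j; rewrite mxE dgE.
case: eqP => [<-|_]; first by rewrite Hr Ha mul1r.
by rewrite mulr0; case: ifP.
Qed.

Lemma actM_mul (k : fieldType) (n : nat) (rho : rel 'I_n) (a X Y : 'M[k]_n) :
  transitive rho -> inT rho a -> inM rho X -> inM rho Y ->
  actM rho a (X *m Y) = actM rho a X *m actM rho a Y.
Proof.
move=> Ht Ha /inMP HX /inMP HY; apply/matrixP=> i j; rewrite !mxE.
case: ifP => rij.
  rewrite mulr_sumr; apply: eq_bigr => r _; rewrite !mxE.
  case: (boolP (rho i r)) => rir; case: (boolP (rho r j)) => rrj.
  - by rewrite -(inT_coc Ha rir rrj); ring.
  - by rewrite (HY r j) // !mulr0.
  - by rewrite (HX i r) // !mul0r ?mulr0.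
  - by rewrite (HX i r) // !mul0r ?mulr0.
symmetry; rewrite big1 // => r _; rewrite !mxE.
case: (boolP (rho i r)) => rir; case: (boolP (rho r j)) => rrj //.
- by rewrite (Ht _ _ _ rir rrj) in rij.
- by rewrite mulr0.
- by rewrite mul0r.
- by rewrite mul0r.
Qed.

Lemma actM_1 (k : fieldType) (n : nat) (rho : rel 'I_n) (a : 'M[k]_n) :
  reflexive rho -> inT rho a -> actM rho a 1%:M = 1%:M.
Proof.
move=> Hr Ha; rewrite -dg1 actM_dg //.
by move=> i; rewrite (inT_diag _ Hr Ha).
Qed.

Lemma actM_unit (k : fieldType) (n : nat) (rho : rel 'I_n) (a B : 'M[k]_n) :
  reflexive rho -> transitive rho -> inT rho a -> inU rho B ->
  actM rho a B *m actM rho a (invmx B) = 1%:M.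
Proof.
move=> Hr Ht Ha /and3P[mB uB mBi].
by rewrite -actM_mul // mulmxV // actM_1.
Qed.

Lemma mul_delta_r (k : fieldType) (n : nat) (Z : 'M[k]_n) (i j p q : 'I_n) :
  (Z *m delta_mx i j) p q = Z p i * (q == j)%:R.
Proof.
rewrite mxE (bigD1 i) //= big1 ?addr0 => [|r /negbTE nr]; rewrite mxE.
  by rewrite eqxx.
by rewrite nr mulr0.
Qed.

Lemma mul_delta_l (k : fieldType) (n : nat) (Z : 'M[k]_n) (i j p q : 'I_n) :
  (delta_mx i j *m Z) p q = (p == i)%:R * Z j q.
Proof.
rewrite mxE (bigD1 j) //= big1 ?addr0 => [|r /negbTE nr]; rewrite mxE.
  by rewrite eqxx andbT.
by rewrite nr andbF mul0r.
Qed.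

Lemma central (k : fieldType) (n : nat) (rho : rel 'I_n) (Z : 'M[k]_n) :
  reflexive rho -> (forall X, inM rho X -> Z *m X = X *m Z) ->
  Z = dg (fun i => Z i i) /\ (forall i j, rho i j -> Z i i = Z j j).
Proof.
move=> Hr H.
have inD (i j : 'I_n) : rho i j -> inM rho (delta_mx i j : 'M[k]_n).
  move=> rij; apply/inMP=> p q npq; rewrite mxE.
  by case: eqP => [epi|]; case: eqP => [eqj|] //=; subst; rewrite rij in npq.
split.
  apply/matrixP=> i j; rewrite dgE; case: eqP => [->//|/eqP nij].
  have := congr1 (fun M : 'M[k]_n => M i j) (H _ (inD j j (Hr j))).
  by rewrite mul_delta_r mul_delta_l eqxx (negbTE nij) mulr1 mul0r.
move=> i j rij; have := congr1 (fun M : 'M[k]_n => M i j) (H _ (inD i j rij)).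
by rewrite mul_delta_r mul_delta_l !eqxx mulr1 mul1r.
Qed.

Lemma conj_central (k : fieldType) (n : nat) (rho : rel 'I_n) (P Q Qi : 'M[k]_n) :
  reflexive rho -> P \in unitmx -> Q *m Qi = 1%:M ->
  (forall X, inM rho X -> P *m X *m invmx P = Q *m X *m Qi) ->
  exists z : 'I_n -> k, [/\ (forall i, z i != 0),
     (forall i j, rho i j -> z i = z j) & Q = P *m dg z].
Proof.
move=> Hr uP HQ H.
have HQ' := inv_eqV HQ.
set Z := invmx P *m Q.
have cZ : forall X, inM rho X -> Z *m X = X *m Z.
  move=> X mX; rewrite /Z.
  have e1 : Q *m X = P *m X *m invmx P *m Q.
    by rewrite H // -!mulmxA HQ' mulmx1.
  by rewrite -mulmxA e1 !mulmxA mulVmx // mul1mx -!mulmxA.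
have [eZ cst] := central Hr cZ.
have ZW : Z *m (Qi *m P) = 1%:M.
  by rewrite /Z mulmxA -(mulmxA _ Q) HQ mulmx1 mulVmx.
have QZ : Q = P *m Z by rewrite /Z mulmxA mulmxV // mul1mx.
clearbody Z.
exists (fun i => Z i i); split => //; last by rewrite -eZ.
move=> i; apply/eqP=> z0.
have := congr1 (fun M : 'M[k]_n => M i i) ZW.
rewrite {1}eZ mul_diag_mx mxE [in X in X * _ = _]mxE z0 mul0r mxE eqxx /=.
by move/eqP; rewrite eq_sym oner_eq0.
Qed.

Lemma dg_comm (k : fieldType) (n : nat) (rho : rel 'I_n) (z : 'I_n -> k) X :
  (forall i j, rho i j -> z i = z j) -> inM rho X ->
  dg z *m X = X *m dg z.
Proof.
move=> Hz /inMP HX; apply/matrixP=> i j.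
rewrite mul_diag_mx mul_mx_diag !mxE.
case: (boolP (rho i j)) => rij; first by rewrite (Hz _ _ rij) mulrC.
by rewrite HX // mulr0 mul0r.
Qed.

Lemma Cmap_dg (k : fieldType) (n : nat) (rho : rel 'I_n) (P : 'M[k]_n) z X :
  P \in unitmx -> (forall i, z i != 0) -> (forall i j, rho i j -> z i = z j) ->
  inM rho X -> Cmap (P *m dg z) X = Cmap P X.
Proof.
move=> uP nz Hz mX; rewrite /Cmap.
have e : invmx (P *m dg z) = dg (fun i => (z i)^-1) *m invmx P.
  apply: inv_eq; rewrite -mulmxA (mulmxA (dg z)) dgV // mul1mx mulmxV //.
rewrite e -!mulmxA; congr (_ *m _); rewrite !mulmxA (dg_comm Hz mX).
by rewrite -(mulmxA X) dgV // mulmx1.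
Qed.

Lemma H_mod (k : fieldType) (n : nat) (rho : rel 'I_n) (X c : 'M[k]_n) z :
  reflexive rho -> (forall i, c i i = 1) -> (forall i, z i != 0) ->
  (forall i j, rho i j -> z i = z j) ->
  modD0 rho (X, c) (X *m dg z, c).
Proof.
move=> Hr Hc nz Hz; exists (D0elt rho z); first by exists z.
rewrite /sdmul /D0elt /= actM_dg //; congr (_, _).
apply/matrixP=> i j; rewrite !mxE; case: ifP => rij.
  by rewrite (Hz _ _ rij) mulVf // mulr1.
by rewrite mulr1.
Qed.

Lemma forest_sol (k : fieldType) (n : nat) (E : rel 'I_n) (w : 'I_n -> 'I_n -> k) :
  symmetric E -> (forall u v, E u v -> ~~ connect (removeE E u v) u v) ->
  (forall u v, E u v -> w u v != 0) -> (forall u v, E u v -> w u v * w v u = 1) ->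
  exists d : 'I_n -> k, (forall i, d i != 0) /\ (forall u v, E u v -> d v = d u * w u v).
Proof.
move=> HS HB Hw Hww.
have [m Hm] : exists m, (#|[pred p : 'I_n * 'I_n | E p.1 p.2]| <= m)%N by exists #|[pred p : 'I_n * 'I_n | E p.1 p.2]|.
elim: m E HS HB Hw Hww Hm => [|m IH] E HS HB Hw Hww Hm.
  exists (fun _ => 1); split => [i|u v Euv]; first by rewrite oner_neq0.
  have : (0 < #|[pred p : 'I_n * 'I_n | E p.1 p.2]|)%N.
    by apply/card_gt0P; exists (u, v).
  by rewrite leqn0 in Hm; rewrite (eqP Hm).
case: (pickP [pred p : 'I_n * 'I_n | E p.1 p.2]) => [[u v] /= Euv | none]; last first.
  exists (fun _ => 1); split => [i|x y Exy]; first by rewrite oner_neq0.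
  by have := none (x, y); rewrite /= Exy.
set E' := removeE E u v.
have E'E x y : E' x y -> E x y by rewrite /E' /removeE => /andP[/andP[]].
have HS' : symmetric E'.
  move=> x y; rewrite /E' /removeE HS.
  by case: (x == u); case: (y == v); case: (x == v); case: (y == u); rewrite /= ?andbT ?andbF.
have HB' : forall x y, E' x y -> ~~ connect (removeE E' x y) x y.
  move=> x y E'xy; apply: contra (HB x y (E'E x y E'xy)).
  apply: connect_sub => a b; rewrite /removeE => /andP[/andP[/andP[/andP[Eab _] _] H1] H2].
  by apply: connect1; rewrite /removeE Eab H1 H2.
have Hm' : (#|[pred p : 'I_n * 'I_n | E' p.1 p.2]| <= m)%N.
  rewrite -ltnS; apply: leq_trans Hm; apply: proper_card; apply/properP; split.
    by apply/subsetP=> [[x y]]; rewrite !inE /=; apply: E'E.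
  exists (u, v); first by rewrite inE.
  by rewrite inE /= /E' /removeE !eqxx /= !andbF.
have [d' [nz' Hd']] := IH E' HS' HB' (fun x y h => Hw x y (E'E x y h))
                               (fun x y h => Hww x y (E'E x y h)) Hm'.
have nuv : ~~ connect E' u v by apply: HB.
set c := d' u * w u v / d' v.
have nzc : c != 0 by rewrite /c !mulf_neq0 ?invr_neq0 ?Hw.
exists (fun x => if connect E' u x then d' x else d' x * c); split.
  by move=> i; case: ifP => _; [apply: nz' | apply: mulf_neq0].
move=> x y Exy; case: (boolP (E' x y)) => E'xy.
  have cxy : connect E' u x = connect E' u y.
    apply/idP/idP => H; apply: connect_trans H _; apply: connect1 => //.
    by rewrite HS'.
  rewrite -cxy (Hd' _ _ E'xy); case: ifP => _ //.
  by rewrite mulrAC.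
move: E'xy; rewrite /E' /removeE Exy /= negb_and !negbK.
case/orP=> /andP[/eqP ex /eqP ey]; subst x y.
  rewrite (negbTE nuv) connect0 /c.
  by rewrite mulrCA mulfV ?mulr1 // nz'.
rewrite (negbTE nuv) connect0 /c.
by rewrite mulrCA mulfV ?nz' // mulr1 -mulrA Hww // mulr1.
Qed.

Lemma inM_dg (k : fieldType) (n : nat) (rho : rel 'I_n) (d : 'I_n -> k) :
  reflexive rho -> inM rho (dg d).
Proof.
move=> Hr; apply/inMP=> i j nr; rewrite dgE; case: eqP => // eij.
by subst; rewrite Hr in nr.
Qed.

Lemma td_diag (k : fieldType) (n : nat) (rho : rel 'I_n) (d : 'I_n -> k) :
  reflexive rho -> (forall i, d i != 0) ->
  forall i, (D0elt rho d).2 i i = 1.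
Proof. by move=> Hr nz i; rewrite /D0elt /= mxE Hr mulVf. Qed.

Lemma D0_inUT (k : fieldType) (n : nat) (rho : rel 'I_n) (x : 'M[k]_n * 'M[k]_n) :
  reflexive rho -> transitive rho -> inD0 rho x -> inUT rho x.
Proof.
move=> Hr Ht [d [nz ->]]; apply/andP; split.
  apply/and3P; split; rewrite /D0elt /=.
  - exact: inM_dg.
  - by have [] := mulmx1_unit (dgV nz).
  - by rewrite dg_unit //; apply: inM_dg.
apply: inTP => [i j rij|i j /negbTE rij|i j r rij rjr]; rewrite /D0elt /= !mxE.
- by rewrite rij mulf_neq0 ?invr_neq0.
- by rewrite rij.
- rewrite rij rjr (Ht _ _ _ rij rjr).
  by rewrite mulrA -(mulrA _ (d j)) mulfV // mulr1.
Qed.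

Lemma D0_one (k : fieldType) (n : nat) (rho : rel 'I_n) :
  inD0 rho (@sdone k n).
Proof.
exists (fun _ => 1); split => [i|]; first by rewrite oner_neq0.
rewrite /sdone /D0elt dg1; congr pair; apply/matrixP=> i j; rewrite !mxE.
by case: ifP; rewrite ?invr1 ?mulr1.
Qed.

Lemma D0_mul (k : fieldType) (n : nat) (rho : rel 'I_n) (x y : 'M[k]_n * 'M[k]_n) :
  reflexive rho -> inD0 rho x -> inD0 rho y -> inD0 rho (sdmul rho x y).
Proof.
move=> Hr [d [nzd ->]] [e [nze ->]].
exists (fun i => d i * e i); split => [i|]; first by rewrite mulf_neq0.
rewrite /sdmul /=. rewrite actM_dg //; last exact: td_diag.
rewrite dgM /D0elt; congr pair; apply/matrixP=> i j; rewrite !mxE.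
case: ifP => _; last by rewrite mulr1.
by rewrite invfM -!mulrA; congr (_ * _); rewrite mulrCA.
Qed.

Lemma D0_inv (k : fieldType) (n : nat) (rho : rel 'I_n) (x : 'M[k]_n * 'M[k]_n) :
  reflexive rho -> inD0 rho x -> inD0 rho (sdinv rho x).
Proof.
move=> Hr [d [nzd ->]].
exists (fun i => (d i)^-1); split => [i|]; first by rewrite invr_neq0.
rewrite /sdinv /D0elt /= dg_unit // actM_dg //.
  congr pair; apply/matrixP=> i j; rewrite !mxE.
  case: ifP => _; last by rewrite invr1.
  by rewrite invfM invrK mulrC.
by move=> i; rewrite !mxE Hr mulVf // invr1.
Qed.

Lemma D0_conj (k : fieldType) (n : nat) (rho : rel 'I_n) (g x : 'M[k]_n * 'M[k]_n) :
  reflexive rho -> transitive rho -> inUT rho g -> inD0 rho x ->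
  inD0 rho (sdmul rho (sdmul rho g x) (sdinv rho g)).
Proof.
move=> Hr Ht /andP[/and3P[mA uA mAi] Ta] [d [nzd ->]].
exists d; split => //; case: g mA uA mAi Ta => A a /= mA uA mAi Ta.
rewrite /sdmul /sdinv /D0elt /=.
rewrite actM_dg //; last by move=> i; rewrite (inT_diag _ Hr Ta).
set t := \matrix_(i, j) (if rho i j then (d i)^-1 * d j else 1).
have e1 : actM rho (famM a t) (actM rho (famV a) (invmx A)) =
          dg (fun i => (d i)^-1) *m invmx A *m dg d.
  apply/matrixP=> i j; rewrite mul_mx_diag mul_diag_mx !mxE.
  case: (boolP (rho i j)) => rij.
    by field; rewrite nzd (inT_nz Ta rij).
  by rewrite (inMP _ _ mAi) // mulr0 mul0r.
rewrite e1 !mulmxA -(mulmxA A) dgV // mulmx1 mulmxV // mul1mx.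
congr pair; apply/matrixP=> i j; rewrite !mxE.
case: (boolP (rho i j)) => rij.
  by field; rewrite nzd (inT_nz Ta rij).
by rewrite (inT_off Ta rij) invr1 !mulr1.
Qed.

Lemma DeltaE_sym (n : nat) (rho : rel 'I_n) : symmetric (DeltaE rho).
Proof. by move=> i j; rewrite /DeltaE /Defs.equivP /compar; case: (rho i j); case: (rho j i). Qed.

Lemma DeltaE_niso (n : nat) (rho : rel 'I_n) i j :
  DeltaE rho i j -> ~~ isolated rho i.
Proof.
case/andP=> ne c; apply/forallPn; exists j.
by rewrite negb_imply c ne.
Qed.

Lemma iso_equiv (n : nat) (rho : rel 'I_n) i j :
  transitive rho -> isolated rho i -> Defs.equivP rho i j -> isolated rho j.
Proof.
move=> Ht /forallP iso /andP[rij rji]; apply/forallP=> l; apply/implyP.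
have isoP : forall l, compar rho i l -> rho i l && rho l i.
  by move=> l' h; have := implyP (iso l') h.
rewrite /compar /Defs.equivP => /orP[rjl|rlj].
  have ril := Ht _ _ _ rij rjl.
  have /andP[_ rli] := isoP l (introT orP (or_introl ril)).
  by rewrite rjl (Ht _ _ _ rli rij).
have rli := Ht _ _ _ rlj rji.
have /andP[ril _] := isoP l (introT orP (or_intror rli)).
by rewrite rlj (Ht _ _ _ rji ril).
Qed.

Lemma const_of_forest (k : fieldType) (n : nat) (rho : rel 'I_n) (F : rel 'I_n)
    (f : 'I_n -> k) :
  reflexive rho -> transitive rho -> spanning_forest rho F ->
  (forall i j, F i j -> rho i j -> f i = f j) ->
  (forall i j, rho i j -> isolated rho i -> Defs.equivP rho i j -> f i = f j) ->
  forall i j, rho i j -> f i = f j.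
Proof.
move=> Hr Ht [FS FD FC _] H1 H2.
have HFe i j : F i j -> f i = f j.
  move=> Fij; have /andP[_ /orP[rij|rji]] := FD _ _ Fij; first exact: H1.
  by rewrite (H1 j i) // FS.
have Hc i j : connect F i j -> f i = f j.
  case/connectP=> p; elim: p i => [|y p IH] i /=; first by move=> _ ->.
  by case/andP=> Fiy Hp Hl; rewrite (HFe _ _ Fiy); apply: IH.
move=> i j rij; case: (boolP (Defs.equivP rho i j)) => eij; last first.
  apply: Hc; rewrite FC; apply: connect1.
  by rewrite /DeltaE eij /compar rij.
case: (boolP (isolated rho i)) => iso; first exact: H2.
case/forallPn: iso => m; rewrite negb_imply => /andP[cim nim].
have /andP[_ rji] := eij.
apply: Hc; rewrite FC; apply: (@connect_trans _ _ m); apply: connect1.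
  by rewrite /DeltaE nim cim.
move: cim nim; rewrite /DeltaE /Defs.equivP /compar.
case rim: (rho i m); case rmi: (rho m i) => //= _ _.
  have -> := Ht _ _ _ rji rim.
  case rmj: (rho m j) => //.
  by rewrite (Ht _ _ _ rmj rji) in rmi.
have -> := Ht _ _ _ rmi rij.
case rjm: (rho j m) => //.
by rewrite (Ht _ _ _ rij rjm) in rim.
Qed.

Definition rep (n : nat) (rho : rel 'I_n) (i : 'I_n) : 'I_n :=
  odflt i [pick l | Defs.equivP rho i l].

Lemma rep_rho (n : nat) (rho : rel 'I_n) i :
  reflexive rho -> rho (rep rho i) i.
Proof.
by move=> Hr; rewrite /rep; case: pickP => [l /andP[]|_] //=.
Qed.

Lemma rep_eq (n : nat) (rho : rel 'I_n) i j :
  reflexive rho -> transitive rho -> Defs.equivP rho i j -> rep rho i = rep rho j.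
Proof.
move=> Hr Ht /andP[rij rji]; rewrite /rep.
have -> : [pick l | Defs.equivP rho i l] = [pick l | Defs.equivP rho j l].
  apply: eq_pick => l; rewrite /Defs.equivP.
  apply/andP/andP=> [[a b]|[a b]]; split.
  - exact: Ht rji a.
  - exact: Ht b rij.
  - exact: Ht rij a.
  - exact: Ht b rji.
case: pickP => [//|none] /=.
by have := none j; rewrite /Defs.equivP Hr.
Qed.

Lemma surj_d (k : fieldType) (n : nat) (rho : rel 'I_n) (F : rel 'I_n) (x : 'M[k]_n) :
  reflexive rho -> transitive rho -> spanning_forest rho F -> inT rho x ->
  exists d : 'I_n -> k, (forall i, d i != 0) /\
   (forall i j, rho i j -> (F i j || (isolated rho i && Defs.equivP rho i j)) ->
      d j = d i * x i j).
Proof.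
move=> Hr Ht [FS FD FC FB] Tx.
pose w := fun u v => if rho u v then x u v else (x v u)^-1.
have Hw1 : forall u v, F u v -> w u v != 0.
  move=> u v Fuv; rewrite /w; case: ifP => r; first exact: inT_nz Tx r.
  have /andP[_ /orP[ruv|rvu]] := FD _ _ Fuv; first by rewrite ruv in r.
  by rewrite invr_neq0 // (inT_nz Tx rvu).
have Hw2 : forall u v, F u v -> w u v * w v u = 1.
  move=> u v Fuv; have /andP[ne /orP[ruv|rvu]] := FD _ _ Fuv; rewrite /w.
    have nrvu : rho v u = false.
      by apply: negbTE; apply: contra ne => rvu; rewrite /Defs.equivP ruv rvu.
    by rewrite ruv nrvu mulfV // (inT_nz Tx ruv).
  have nruv : rho u v = false.
    by apply: negbTE; apply: contra ne => ruv; rewrite /Defs.equivP ruv rvu.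
  by rewrite nruv rvu mulVf // (inT_nz Tx rvu).
have [dF [nzF HdF]] := forest_sol FS FB Hw1 Hw2.
exists (fun i => if isolated rho i then x (rep rho i) i else dF i); split.
  move=> i; case: ifP => _; last exact: nzF.
  exact: inT_nz Tx (rep_rho _ Hr).
move=> i j rij /orP[Fij | /andP[iso eij]].
  have Dij := FD _ _ Fij.
  have Dji : DeltaE rho j i by rewrite DeltaE_sym.
  rewrite (negbTE (DeltaE_niso Dij)) (negbTE (DeltaE_niso Dji)).
  by rewrite (HdF _ _ Fij) /w rij.
rewrite iso (iso_equiv Ht iso eij) -(rep_eq Hr Ht eij).
by rewrite (inT_coc Tx (rep_rho _ Hr) rij).
Qed.

Lemma G_one (k : fieldType) (n : nat) (rho : rel 'I_n) (F : rel 'I_n) (a : 'M[k]_n) i j :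
  inG rho F a -> rho i j -> (F i j || (isolated rho i && Defs.equivP rho i j)) ->
  a i j = 1.
Proof.
case/andP=> _ /forallP/(_ i)/forallP/(_ j)/implyP H rij h.
by apply/eqP/H; rewrite rij h.
Qed.

Unset Implicit Arguments.

Theorem mainTheorem8 (k : fieldType) (n : nat) (rho : rel 'I_n)
  (Hn : (0 < n)%N) (Hrefl : reflexive rho) (Htrans : transitive rho)
  (F : rel 'I_n) (HF : spanning_forest rho F) :
  (* D_0 is a normal subgroup of U(M(rho,k)) x| T *)
  ((forall x : 'M[k]_n * 'M[k]_n, inD0 rho x -> inUT rho x) /\
   inD0 rho (@sdone k n) /\
   (forall x y : 'M[k]_n * 'M[k]_n, inD0 rho x -> inD0 rho y -> inD0 rho (sdmul rho x y)) /\
   (forall x : 'M[k]_n * 'M[k]_n, inD0 rho x -> inD0 rho (sdinv rho x)) /\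
   (forall g x : 'M[k]_n * 'M[k]_n, inUT rho g -> inD0 rho x ->
                inD0 rho (sdmul rho (sdmul rho g x) (sdinv rho g)))) /\
  (* the action of G on I, (a) . C_A = C_{a . A}, is well defined *)
  (forall (a A B : 'M[k]_n), inG rho F a -> inU rho A -> inU rho B ->
     autEq rho (Cmap A) (Cmap B) ->
     autEq rho (Cmap (actM rho a A)) (Cmap (actM rho a B))) /\
  (* Psi is well defined *)
  (forall (a A B : 'M[k]_n), inG rho F a -> inU rho A -> inU rho B ->
     autEq rho (Cmap A) (Cmap B) -> modD0 rho (A, a) (B, a)) /\
  (* Psi is a homomorphism: (C_A,a)(C_B,b) = (C_A C_{a.B}, ab) *)
  (forall (a b A B C : 'M[k]_n), inG rho F a -> inG rho F b ->
     inU rho A -> inU rho B -> inU rho C ->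
     autEq rho (Cmap C) (fun X => Cmap A (Cmap (actM rho a B) X)) ->
     modD0 rho (C, famM a b) (sdmul rho (A, a) (B, b))) /\
  (* Psi is injective *)
  (forall (a b A B : 'M[k]_n), inG rho F a -> inG rho F b ->
     inU rho A -> inU rho B -> modD0 rho (A, a) (B, b) ->
     autEq rho (Cmap A) (Cmap B) /\ a = b) /\
  (* Psi is surjective *)
  (forall x : 'M[k]_n * 'M[k]_n, inUT rho x ->
     exists (A a : 'M[k]_n), [/\ inU rho A, inG rho F a & modD0 rho (A, a) x]).
Proof.
have TG : forall a : 'M[k]_n, inG rho F a -> inT rho a by move=> a /andP[].
have cB : forall A B : 'M[k]_n, inU rho A -> inU rho B -> autEq rho (Cmap A) (Cmap B) ->
    exists z : 'I_n -> k, [/\ (forall i, z i != 0),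
     (forall i j, rho i j -> z i = z j) & B = A *m dg z].
  move=> A B /and3P[_ uA _] /and3P[_ uB _] HAB.
  apply: conj_central => //; first exact: mulmxV.
  by move=> X mX; apply: HAB.
split.
  split; first by move=> x; apply: D0_inUT.
  split; first exact: D0_one.
  split; first by move=> x y; apply: D0_mul.
  split; first by move=> x; apply: D0_inv.
  by move=> g x; apply: D0_conj.
split.
  move=> a A B Ga UA UB HAB X mX.
  have [z [nz cz eB]] := cB A B UA UB HAB.
  have Ta := TG a Ga.
  have [mA uA mAi] := and3P UA.
  have e : actM rho a B = actM rho a A *m dg z.
    by rewrite eB actM_mul ?actM_dg // ?inM_dg // => i; rewrite (inT_diag _ Hrefl Ta).
  have [uaA _] := mulmx1_unit (actM_unit Hrefl Htrans Ta UA).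
  by rewrite e (Cmap_dg (rho:=rho)).
split.
  move=> a A B Ga UA UB HAB.
  have [z [nz cz eB]] := cB A B UA UB HAB.
  rewrite eB; apply: H_mod => // i; exact: inT_diag Hrefl (TG a Ga).
split.
  move=> a b A B C Ga Gb UA UB UC HC.
  have Ta := TG a Ga; have Tb := TG b Gb.
  have [mA uA mAi] := and3P UA.
  have [mC uC mCi] := and3P UC.
  have HE := actM_unit Hrefl Htrans Ta UB.
  have HQ : (A *m actM rho a B) *m (actM rho a (invmx B) *m invmx A) = 1%:M.
    by rewrite -mulmxA (mulmxA (actM rho a B)) HE mul1mx mulmxV.
  have HC' : forall X, inM rho X -> C *m X *m invmx C =
      (A *m actM rho a B) *m X *m (actM rho a (invmx B) *m invmx A).
    by move=> X mX; have := HC X mX; rewrite /Cmap (inv_eq HE) !mulmxA.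
  have [z [nz cz eQ]] := conj_central Hrefl uC HQ HC'.
  rewrite /sdmul /= eQ; apply: H_mod => // i.
  by rewrite mxE (inT_diag _ Hrefl Ta) (inT_diag _ Hrefl Tb) mulr1.
split.
  move=> a b A B Ga Gb UA UB [D [d [nzd ->]] eq].
  have Ta := TG a Ga.
  have [mA uA mAi] := and3P UA.
  move: eq; rewrite /sdmul /D0elt /= actM_dg //; last first.
    by move=> i; rewrite (inT_diag _ Hrefl Ta).
  case=> eB eb.
  have Hc : forall i j, rho i j -> d i = d j.
    apply: (const_of_forest Hrefl Htrans HF).
      move=> i j Fij rij.
      have h : b i j = 1 by apply: (G_one Gb rij); rewrite Fij.
      have h' : a i j = 1 by apply: (G_one Ga rij); rewrite Fij.
      move: h; rewrite eb mxE h' mxE rij mul1r => h.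
      by move/(congr1 (fun t => d i * t)): h; rewrite mulrA mulfV // mul1r mulr1.
    move=> i j rij iso eij.
    have h : b i j = 1 by apply: (G_one Gb rij); rewrite iso eij orbT.
    have h' : a i j = 1 by apply: (G_one Ga rij); rewrite iso eij orbT.
    move: h; rewrite eb mxE h' mxE rij mul1r => h.
    by move/(congr1 (fun t => d i * t)): h; rewrite mulrA mulfV // mul1r mulr1.
  split.
    by move=> X mX; rewrite eB (Cmap_dg (rho:=rho)).
  rewrite eb; apply/matrixP=> i j; rewrite !mxE.
  case: ifP => rij; last by rewrite mulr1.
  by rewrite (Hc _ _ rij) mulVf // mulr1.
move=> [X x] /andP[/and3P[mX uX mXi] Tx]; rewrite /= in mX uX mXi Tx.
have [d [nzd Hd]] := surj_d Hrefl Htrans HF Tx.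
pose A := X *m dg (fun i => (d i)^-1).
pose a : 'M[k]_n := \matrix_(i, j) (if rho i j then x i j * d i / d j else 1).
have Ta : inT rho a.
  apply: inTP => [i j rij|i j /negbTE rij|i j r rij rjr]; rewrite !mxE.
  - by rewrite rij !mulf_neq0 ?invr_neq0 ?(inT_nz Tx rij).
  - by rewrite rij.
  - rewrite rij rjr (Htrans _ _ _ rij rjr) -(inT_coc Tx rij rjr).
    by field; rewrite !nzd.
have eDD : dg (fun i => (d i)^-1) *m dg d = 1%:M by apply: inv_eqV; apply: dgV.
have eA : A *m (dg d *m invmx X) = 1%:M.
  by rewrite /A -mulmxA (mulmxA (dg (fun i => (d i)^-1))) eDD mul1mx mulmxV.
exists A, a; split.
- apply/and3P; split.
  + by apply/inMP=> i j nr; rewrite /A mul_mx_diag mxE (inMP _ _ mX) // mul0r.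
  + by have [] := mulmx1_unit eA.
  + rewrite (inv_eq eA); apply/inMP=> i j nr.
    by rewrite mul_diag_mx mxE (inMP _ _ mXi) // mulr0.
- apply/andP; split => //.
  apply/forallP=> i; apply/forallP=> j; apply/implyP=> /andP[rij H].
  rewrite mxE rij (Hd i j rij H).
  by apply/eqP; field; rewrite nzd (inT_nz Tx rij).
- exists (D0elt rho d); first by exists d.
  rewrite /sdmul /D0elt /= actM_dg //; last by move=> i; rewrite (inT_diag _ Hrefl Ta).
  congr pair; first by rewrite /A -mulmxA eDD mulmx1.
  apply/matrixP=> i j; rewrite !mxE.
  case: ifP => rij; last by rewrite (inT_off Tx (negbT rij)) mulr1.
  by field; rewrite !nzd.
Qed.
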